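(* Let $\mathcal E=\widetilde{\Omega^1_D}(\mathcal A)$ be the bimodule of one-forms of a spectral triple $(\mathcal A,\mathcal H,D)$ and suppose Assumption III$'$ holds with data $\mathcal A'\subseteq\mathcal Z(\mathcal A)$, $\mathcal E'\subseteq\mathcal Z(\mathcal E)$. Then $\mathcal Z(\mathcal E)\cong\mathcal E'\otimes_{\mathcal A'}\mathcal Z(\mathcal A)$.
   Context: $\mathcal E$ is the span in $B(\mathcal H)$ of $a[D,b]$, $a,b\in\mathcal A$; $\mathcal Z(\mathcal E)=\{e:ea=ae\ \forall a\}$; $\mathcal Z(\mathcal A)$ the center. Assumption III$'$: there exist a unital $*$-subalgebra $\mathcal A'$ of $\mathcal Z(\mathcal A)$ and an $\mathcal A'$-submodule $\mathcal E'$ of $\mathcal Z(\mathcal E)$ such that $\mathcal E'$ is finitely generated projective over $\mathcal A'$ and the map $\mathcal E'\otimes_{\mathcal A'}\mathcal A\to\mathcal E$, $\sum_ie_i\otimes a_i\mapsto\sum_ie_ia_i$, is an isomorphism of vector spaces. *)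

(* Defs.v *)
From HB Require Import structures.
From mathcomp Require Import all_boot all_order all_algebra.
Set Implicit Arguments. Unset Strict Implicit. Unset Printing Implicit Defensive.
Import Order.TTheory GRing.Theory Num.Theory.
Local Open Scope ring_scope.

(* Ambient algebra B over a field K: stands for B(H) (or any algebra of
   operators containing A and D).  Subsets of B are predicates B -> Prop. *)
Section Defs.
Variables (K : fieldType) (B : algType K).

Definition commutator (D b : B) : B := D * b - b * D.

Definition is_subalg (S : B -> Prop) : Prop :=
  [/\ S 1, (forall x y, S x -> S y -> S (x + y)),
      (forall (k : K) x, S x -> S (k *: x)) &
      (forall x y, S x -> S y -> S (x * y))].

Definition one_forms (A : B -> Prop) (D : B) : B -> Prop := fun x =>
  exists s : seq (K * (B * B)),
    (forall t, t \in s -> A t.2.1 /\ A t.2.2) /\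
    x = \sum_(t <- s) t.1 *: (t.2.1 * commutator D t.2.2).

Definition centralizer_in (A M : B -> Prop) : B -> Prop := fun m =>
  M m /\ forall a, A a -> m * a = a * m.

(* ---------- algebraic tensor product  P (x)_S Q, P, Q, S subsets of B ----
   Elements of the free abelian group on B * B are represented by formal
   integer combinations (seq (int * (B * B))); two such are equal in the free
   group iff they have the same coefficient function [fcoeff]. *)
Definition fsum := seq (int * (B * B)).

Definition fcoeff (s : fsum) (k : B * B) : int :=
  \sum_(x <- s | x.2 == k) x.1.

Definition supported (P Q : B -> Prop) (s : fsum) : Prop :=
  forall x, x \in s -> P x.2.1 /\ Q x.2.2.

Definition fmul (s : fsum) : B := \sum_(x <- s) (x.2.1 * x.2.2) *~ x.1.

(* generators of the relations defining P (x)_S Q (S acting on P on the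
   right and on Q on the left by multiplication in B) *)
Inductive tensor_rel (P S Q : B -> Prop) : fsum -> Prop :=
| trel_addl e1 e2 a : P e1 -> P e2 -> Q a ->
    tensor_rel P S Q [:: (1, (e1 + e2, a)); (-1, (e1, a)); (-1, (e2, a))]
| trel_addr e a1 a2 : P e -> Q a1 -> Q a2 ->
    tensor_rel P S Q [:: (1, (e, a1 + a2)); (-1, (e, a1)); (-1, (e, a2))]
| trel_bal e c a : P e -> S c -> Q a ->
    tensor_rel P S Q [:: (1, (e * c, a)); (-1, (e, c * a))].

(* s represents 0 in P (x)_S Q : s lies in the subgroup of the free abelian
   group generated by the relations *)
Definition tensor_zero (P S Q : B -> Prop) (s : fsum) : Prop :=
  exists rs : seq (int * fsum),
    (forall r, r \in rs -> tensor_rel P S Q r.2) /\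
    forall k, fcoeff s k = \sum_(r <- rs) r.1 * fcoeff r.2 k.

(* the map P (x)_S Q -> M induced by multiplication is a (well-defined)
   bijection onto M *)
Definition mult_iso (P S Q M : B -> Prop) : Prop :=
  [/\ (forall s, supported P Q s -> M (fmul s)),
      (forall x, M x -> exists s, supported P Q s /\ fmul s = x) &
      (forall s, supported P Q s -> fmul s = 0 -> tensor_zero P S Q s)].

(* E' is a finitely generated projective S-module: a retract of S^n,
   i.e. there are S-linear maps sigma = (phi_j) : E' -> S^n and
   pi : S^n -> E', pi(c) = sum_j c_j e_j, with pi o sigma = id. *)
Definition fg_projective (S P : B -> Prop) : Prop :=
  exists (n : nat) (es : 'I_n -> B) (phi : 'I_n -> B -> B),
    [/\ (forall j, P (es j)),
        (forall j x, P x -> S (phi j x)),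
        (forall j x y, P x -> P y -> phi j (x + y) = phi j x + phi j y),
        (forall j c x, S c -> P x -> phi j (c * x) = c * phi j x) &
        (forall x, P x -> x = \sum_(j < n) phi j x * es j)].

Definition is_submodule (S P : B -> Prop) : Prop :=
  [/\ P 0, (forall x y, P x -> P y -> P (x + y)) &
      (forall c x, S c -> P x -> P (c * x))].

End Defs.

(* Main.v *)
Require Import Defs.
From HB Require Import structures.
From mathcomp Require Import all_boot all_order all_algebra.
From mathcomp Require Import ring.
Import Order.TTheory GRing.Theory Num.Theory.
Local Open Scope ring_scope.
Set Implicit Arguments. Unset Strict Implicit.

Section Gen.
Variables (K : fieldType) (B : algType K).
Local Notation FS := (seq (int * (B * B))).

Definition scl (n : int) (s : FS) : FS := [seq (n * x.1, x.2) | x <- s].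

Lemma fcoeff_cat (s t : FS) k : fcoeff (s ++ t) k = fcoeff s k + fcoeff t k.
Proof. by rewrite /fcoeff big_cat. Qed.
Lemma fcoeff_cons x (s : FS) k :
  fcoeff (x :: s) k = (if x.2 == k then x.1 else 0) + fcoeff s k.
Proof. by rewrite /fcoeff big_cons; case: ifP; rewrite ?add0r. Qed.
Lemma fcoeff_nil k : fcoeff (B:=B) [::] k = 0.
Proof. by rewrite /fcoeff big_nil. Qed.
Lemma fcoeff_scl n (s : FS) k : fcoeff (scl n s) k = n * fcoeff s k.
Proof.
elim: s => [|x s IH]; first by rewrite /scl /= !fcoeff_nil mulr0.
by rewrite /scl map_cons !fcoeff_cons -/(scl n s) IH /=; case: ifP => _; ring.
Qed.
Lemma fcoeff_flatten (L : seq FS) k :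
  fcoeff (flatten L) k = \sum_(s <- L) fcoeff s k.
Proof.
elim: L => [|s L IH]; first by rewrite big_nil fcoeff_nil.
by rewrite /= fcoeff_cat IH big_cons.
Qed.
Lemma fcoeff_seq1 (s : FS) k : fcoeff s k = \sum_(x <- s) fcoeff [:: x] k.
Proof.
elim: s => [|x s IH]; first by rewrite big_nil fcoeff_nil.
by rewrite fcoeff_cons big_cons IH fcoeff_cons fcoeff_nil addr0.
Qed.

Ltac coeff := move=> ?; rewrite /= ?(fcoeff_cat, fcoeff_scl, fcoeff_cons, fcoeff_nil) /=;
  repeat (case: ifP => _); ring.

Variables (P S Q : B -> Prop).
Local Notation tz := (tensor_zero P S Q).

Lemma tz_ext s t : (forall k, fcoeff s k = fcoeff t k) -> tz s -> tz t.
Proof. by move=> e [rs [H1 H2]]; exists rs; split=> // k; rewrite -e. Qed.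
Lemma tz_nil : tz [::].
Proof. by exists [::]; split=> // k; rewrite fcoeff_nil big_nil. Qed.
Lemma tz_cat s t : tz s -> tz t -> tz (s ++ t).
Proof.
move=> [rs [H1 H2]] [rs' [H1' H2']]; exists (rs ++ rs'); split.
  by move=> r; rewrite mem_cat => /orP [] ?; [apply: H1 | apply: H1'].
by move=> k; rewrite fcoeff_cat big_cat H2 H2'.
Qed.
Lemma tz_scl n s : tz s -> tz (scl n s).
Proof.
move=> [rs [H1 H2]]; exists [seq (n * r.1, r.2) | r <- rs]; split.
  by move=> r /mapP [r' Hr' ->]; exact: (H1 _ Hr').
by move=> k; rewrite fcoeff_scl H2 big_map mulr_sumr; apply: eq_bigr => r _; rewrite mulrA.
Qed.
Lemma tz_rel r : tensor_rel P S Q r -> tz r.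
Proof.
move=> H; exists [:: (1, r)]; split=> [r'|k]; last by rewrite big_seq1 mul1r.
by rewrite inE => /eqP ->.
Qed.

Definition eqv s t := tz (s ++ scl (-1) t).

Lemma eqv_ext s t : (forall k, fcoeff s k = fcoeff t k) -> eqv s t.
Proof.
move=> e; apply: (tz_ext _ tz_nil) => k.
by rewrite fcoeff_nil fcoeff_cat fcoeff_scl e; ring.
Qed.
Lemma eqv_refl s : eqv s s. Proof. exact: eqv_ext. Qed.
Lemma eqv_sym s t : eqv s t -> eqv t s.
Proof. move=> /(tz_scl (-1)); apply: tz_ext => k.
rewrite !(fcoeff_cat, fcoeff_scl); ring. Qed.
Lemma eqv_trans s t u : eqv s t -> eqv t u -> eqv s u.
Proof. move=> H1 H2; move: (tz_cat H1 H2); apply: tz_ext => k.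
rewrite !fcoeff_cat !fcoeff_scl; ring. Qed.
Lemma eqv_cat s s' t t' : eqv s s' -> eqv t t' -> eqv (s ++ t) (s' ++ t').
Proof. move=> H1 H2; move: (tz_cat H1 H2); apply: tz_ext => k.
rewrite !(fcoeff_cat, fcoeff_scl); ring. Qed.
Lemma eqv_scl n s t : eqv s t -> eqv (scl n s) (scl n t).
Proof. move=> /(tz_scl n); apply: tz_ext => k.
rewrite !(fcoeff_cat, fcoeff_scl); ring. Qed.
Lemma eqv_map (I : eqType) (l : seq I) (f g : I -> FS) :
  (forall i, i \in l -> eqv (f i) (g i)) ->
  eqv (flatten (map f l)) (flatten (map g l)).
Proof.
elim: l => [|i l IH] H /=; first exact: eqv_refl.
apply: eqv_cat; first by apply: H; rewrite inE eqxx.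
by apply: IH => j Hj; apply: H; rewrite inE Hj orbT.
Qed.
Lemma eqv_tz s : eqv s [::] -> tz s.
Proof. by apply: tz_ext => k; rewrite fcoeff_cat /= fcoeff_nil addr0. Qed.
Lemma eqv_rel r : tensor_rel P S Q r -> eqv r [::].
Proof. move=> /tz_rel; apply: tz_ext => k; rewrite fcoeff_cat /= fcoeff_nil addr0 //. Qed.


Section Rel.
Hypotheses (P0 : P 0) (PD : forall x y, P x -> P y -> P (x + y))
  (Q0 : Q 0) (QD : forall x y, Q x -> Q y -> Q (x + y)) (QN : forall x, Q x -> Q (- x)).

Lemma Qmz x m : Q x -> Q (x *~ m).
Proof.
move=> Hx; have Hn : forall n, Q (x *+ n).
  by elim=> [|n IH]; rewrite ?mulr0n // mulrSr; apply: QD.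
by case: m => n; [exact: Hn | rewrite NegzE mulrNz; apply: QN; exact: Hn].
Qed.
Lemma Qsum (I : eqType) (l : seq I) (f : I -> B) :
  (forall i, i \in l -> Q (f i)) -> Q (\sum_(i <- l) f i).
Proof.
elim: l => [|i l IH] H; first by rewrite big_nil.
rewrite big_cons; apply: QD; first by apply: H; rewrite inE eqxx.
by apply: IH => j Hj; apply: H; rewrite inE Hj orbT.
Qed.
Lemma Psum (I : eqType) (l : seq I) (f : I -> B) :
  (forall i, i \in l -> P (f i)) -> P (\sum_(i <- l) f i).
Proof.
elim: l => [|i l IH] H; first by rewrite big_nil.
rewrite big_cons; apply: PD; first by apply: H; rewrite inE eqxx.
by apply: IH => j Hj; apply: H; rewrite inE Hj orbT.
Qed.

Lemma eqv_R4 e : P e -> eqv [:: (1, (e, 0))] [::].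
Proof.
move=> He; have H : tensor_rel P S Q [:: (1, (e, 0 + 0)); (-1, (e, 0)); (-1, (e, 0))].
  by apply: trel_addr.
rewrite addr0 in H; move: (tz_scl (-1) (tz_rel H)); apply: tz_ext; coeff.
Qed.
Lemma eqv_L4 z : Q z -> eqv [:: (1, (0, z))] [::].
Proof.
move=> Hz; have H : tensor_rel P S Q [:: (1, (0 + 0, z)); (-1, (0, z)); (-1, (0, z))].
  by apply: trel_addl.
rewrite addr0 in H; move: (tz_scl (-1) (tz_rel H)); apply: tz_ext; coeff.
Qed.
Lemma eqv_N1 e b : P e -> Q b -> eqv [:: (-1, (e, b))] [:: (1, (e, - b))].
Proof.
move=> He Hb; have H : tensor_rel P S Q [:: (1, (e, b + - b)); (-1, (e, b)); (-1, (e, - b))].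
  by apply: trel_addr => //; apply: QN.
rewrite subrr in H; move: (tz_cat (tz_rel H) (tz_scl (-1) (eqv_R4 He))); apply: tz_ext; coeff.
Qed.
Lemma eqv_AP e a b : P e -> Q a -> Q b ->
  eqv [:: (1, (e, a)); (1, (e, b))] [:: (1, (e, a + b))].
Proof.
move=> He Ha Hb; have H : tensor_rel P S Q [:: (1, (e, a + b)); (-1, (e, a)); (-1, (e, b))].
  by apply: trel_addr.
move: (tz_scl (-1) (tz_rel H)); apply: tz_ext; coeff.
Qed.
Lemma eqv_LP x y z : P x -> P y -> Q z ->
  eqv [:: (1, (x + y, z))] [:: (1, (x, z)); (1, (y, z))].
Proof.
move=> Hx Hy Hz; have H : tensor_rel P S Q [:: (1, (x + y, z)); (-1, (x, z)); (-1, (y, z))].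
  by apply: trel_addl.
move: (tz_rel H); apply: tz_ext; coeff.
Qed.
Lemma eqv_BL e c a : P e -> S c -> Q a -> e * c = c * e ->
  eqv [:: (1, (c * e, a))] [:: (1, (e, c * a))].
Proof.
move=> He Hc Ha ec; have H : tensor_rel P S Q [:: (1, (e * c, a)); (-1, (e, c * a))].
  by apply: trel_bal.
rewrite ec in H; move: (tz_rel H); apply: tz_ext; coeff.
Qed.
Lemma eqv_Mnat e a n : P e -> Q a -> eqv [:: (n%:Z, (e, a))] [:: (1, (e, a *+ n))].
Proof.
move=> He Ha; elim: n => [|n IH].
  apply: (@eqv_trans _ [::]); first by apply: eqv_ext; coeff.
  by rewrite mulr0n; apply: eqv_sym; apply: eqv_R4.
apply: (@eqv_trans _ [:: (n%:Z, (e, a)); (1, (e, a))]).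
  by apply: eqv_ext; rewrite -addn1 PoszD; coeff.
apply: (@eqv_trans _ [:: (1, (e, a *+ n)); (1, (e, a))]).
  by rewrite -[[:: _; _]]cat1s -[[:: (1, _); _]]cat1s; apply: eqv_cat => //; apply: eqv_refl.
by rewrite mulrSr; apply: eqv_AP => //; exact: (Qmz n Ha).
Qed.
Lemma eqv_Mint e a m : P e -> Q a -> eqv [:: (m, (e, a))] [:: (1, (e, a *~ m))].
Proof.
move=> He Ha; case: m => n; first exact: eqv_Mnat.
apply: (@eqv_trans _ (scl (-1) [:: ((n.+1)%:Z, (e, a))])).
  by apply: eqv_ext; rewrite NegzE; coeff.
apply: (@eqv_trans _ (scl (-1) [:: (1, (e, a *+ n.+1))])).
  exact: eqv_scl (eqv_Mnat _ He Ha).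
apply: (@eqv_trans _ [:: (-1, (e, a *+ n.+1))]).
  by apply: eqv_ext; coeff.
rewrite NegzE mulrNz pmulrn; apply: eqv_N1 => //; exact: (Qmz n.+1 Ha).
Qed.
Lemma eqv_AC e (I : eqType) (l : seq I) (nn : I -> int) (f : I -> B) :
  P e -> (forall i, i \in l -> Q (f i)) ->
  eqv [seq (nn i, (e, f i)) | i <- l] [:: (1, (e, \sum_(i <- l) f i *~ nn i))].
Proof.
move=> He; elim: l => [|i l IH] H.
  by rewrite big_nil; apply: eqv_sym; apply: eqv_R4.
have Hi : Q (f i) by apply: H; rewrite inE eqxx.
have Hl : forall j, j \in l -> Q (f j) by move=> j Hj; apply: H; rewrite inE Hj orbT.
rewrite big_cons map_cons -[_ :: map _ _]cat1s.
apply: (@eqv_trans _ ([:: (1, (e, f i *~ nn i))] ++ [:: (1, (e, \sum_(j <- l) f j *~ nn j))])).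
  by apply: eqv_cat; [apply: eqv_Mint | apply: IH].
apply: eqv_AP => //; first exact: Qmz.
by apply: Qsum => j Hj; apply: Qmz; apply: Hl.
Qed.
Lemma eqv_LC (I : eqType) (l : seq I) (f : I -> B) z :
  (forall i, i \in l -> P (f i)) -> Q z ->
  eqv [:: (1, (\sum_(i <- l) f i, z))] (flatten [seq [:: (1, (f i, z))] | i <- l]).
Proof.
move=> + Hz; elim: l => [|i l IH] H.
  by rewrite big_nil; apply: eqv_L4.
have Hi : P (f i) by apply: H; rewrite inE eqxx.
have Hl : forall j, j \in l -> P (f j) by move=> j Hj; apply: H; rewrite inE Hj orbT.
rewrite big_cons map_cons /=.
apply: (@eqv_trans _ [:: (1, (f i, z)); (1, (\sum_(j <- l) f j, z))]).
  by apply: eqv_LP => //; apply: Psum.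
rewrite -[[:: _; _]]cat1s -[_ :: flatten _]cat1s; apply: eqv_cat; [exact: eqv_refl | exact: IH].
Qed.
End Rel.

Definition Fg (g : B -> B -> B) (s : FS) : B := \sum_(x <- s) g x.2.1 x.2.2 *~ x.1.

Lemma Fg_coeff g s (L : seq (B * B)) : uniq L -> (forall x, x \in s -> x.2 \in L) ->
  Fg g s = \sum_(k <- L) g k.1 k.2 *~ fcoeff s k.
Proof.
elim: s => [|x s IH] U H.
  rewrite /Fg big_nil; symmetry; apply: big1 => k _; by rewrite fcoeff_nil mulr0z.
rewrite /Fg big_cons -/(Fg g s) IH //; last by move=> y Hy; apply: H; rewrite inE Hy orbT.
under [RHS]eq_bigr => k _ do rewrite fcoeff_cons mulrzDr.
rewrite big_split /=; congr (_ + _).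
rewrite (bigD1_seq x.2) //=; last by apply: H; rewrite inE eqxx.
rewrite eqxx big1 ?addr0 // => k /negbTE; rewrite eq_sym => ->; by rewrite mulr0z.
Qed.
Lemma Fg_ext g s t : (forall k, fcoeff s k = fcoeff t k) -> Fg g s = Fg g t.
Proof.
move=> e; set L := undup [seq x.2 | x <- s ++ t].
have U : uniq L by apply: undup_uniq.
have Hs : forall x, x \in s -> x.2 \in L.
  by move=> x Hx; rewrite mem_undup; apply: map_f; rewrite mem_cat Hx.
have Ht : forall x, x \in t -> x.2 \in L.
  by move=> x Hx; rewrite mem_undup; apply: map_f; rewrite mem_cat Hx orbT.
rewrite (Fg_coeff g U Hs) (Fg_coeff g U Ht).
by apply: eq_bigr => k _; rewrite e.
Qed.
Lemma Fg_cat g s t : Fg g (s ++ t) = Fg g s + Fg g t.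
Proof. by rewrite /Fg big_cat. Qed.
Lemma Fg_scl g n s : Fg g (scl n s) = Fg g s *~ n.
Proof. by rewrite /Fg /scl big_map mulrz_suml; apply: eq_bigr => x _; rewrite mulrzA_C. Qed.
Lemma Fg_flatten g (L : seq FS) : Fg g (flatten L) = \sum_(s <- L) Fg g s.
Proof.
elim: L => [|s L IH]; first by rewrite /Fg !big_nil.
by rewrite /= Fg_cat IH big_cons.
Qed.
Lemma Fg_tz g s : (forall r, tensor_rel P S Q r -> Fg g r = 0) ->
  tensor_zero P S Q s -> Fg g s = 0.
Proof.
move=> Hr [rs [H1 H2]].
rewrite (@Fg_ext g s (flatten [seq scl r.1 r.2 | r <- rs])); last first.
  by move=> k; rewrite H2 fcoeff_flatten big_map; apply: eq_bigr => r _; rewrite fcoeff_scl.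
rewrite Fg_flatten big_map big1_seq // => r /andP[_ Hm].
by rewrite Fg_scl Hr ?mul0rz //; apply: H1.
Qed.

Lemma Fg_sa g (s : FS) a :
  (forall y, y \in s -> g y.2.1 (y.2.2 * a) = g y.2.1 y.2.2 * a /\
                        g y.2.1 (a * y.2.2) = a * g y.2.1 y.2.2) ->
  Fg g ([seq (y.1, (y.2.1, y.2.2 * a)) | y <- s] ++ [seq (- y.1, (y.2.1, a * y.2.2)) | y <- s])
  = Fg g s * a - a * Fg g s.
Proof.
move=> H; rewrite Fg_cat /Fg !big_map mulr_suml mulr_sumr -sumrN.
congr (_ + _); apply: eq_big_seq => y Hy /=; have [h1 h2] := H y Hy.
  by rewrite h1 mulrzAl.
by rewrite h2 mulrNz mulrzAr.
Qed.
End Gen.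

Unset Implicit Arguments.
Theorem proposition4p16 (K : fieldType) (B : algType K)
    (A : B -> Prop) (D : B) (A' E' : B -> Prop) :
  is_subalg A ->
  (* Assumption III' *)
  is_subalg A' ->
  (forall c, A' c -> centralizer_in A A c) ->
  is_submodule A' E' ->
  (forall e, E' e -> centralizer_in A (one_forms A D) e) ->
  fg_projective A' E' ->
  mult_iso E' A' A (one_forms A D) ->
  (* conclusion: Z(E) = E' (x)_{A'} Z(A) via the multiplication map *)
  mult_iso E' A' (centralizer_in A A) (centralizer_in A (one_forms A D)).
Proof.
move=> HA HA' HA'c HE' HE'c [n [es [phi [Hes Hphi Hadd Hlin Hdec]]]] [Mi1 Mi2 Mi3].
have [A1 AD AZ AM] := HA.
have A0 : A 0 by rewrite -(scale0r (1 : B)); apply: AZ.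
have AN : forall x, A x -> A (- x) by move=> x Hx; rewrite -scaleN1r; apply: AZ.
set ZA := centralizer_in A A.
have Z0 : ZA 0 by split=> // a _; rewrite mul0r mulr0.
have ZD : forall x y, ZA x -> ZA y -> ZA (x + y).
  move=> x y [Hx cx] [Hy cy]; split; first exact: AD.
  by move=> a Ha; rewrite mulrDl mulrDr cx ?cy.
have ZN : forall x, ZA x -> ZA (- x).
  by move=> x [Hx cx]; split; [exact: AN | move=> a Ha; rewrite mulNr mulrN cx].
have ZM : forall x y, ZA x -> ZA y -> ZA (x * y).
  move=> x y [Hx cx] [Hy cy]; split; first exact: AM.
  by move=> a Ha; rewrite -mulrA cy // mulrA cx // mulrA.
have A'Z : forall c, A' c -> ZA c by exact: HA'c.
have A'A : forall c, A' c -> A c by move=> c /A'Z [].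
have [E0 ED EM] := HE'.
have Ecomm : forall e a, E' e -> A a -> e * a = a * e.
  by move=> e a He Ha; apply: (HE'c e He).2.
have ZAA : forall x, ZA x -> A x by move=> x [].
set g := fun (j : 'I_n) (e a : B) => phi j e * a.
have Hrel : forall j r, tensor_rel E' A' A r -> Fg (g j) r = 0.
  move=> j r; case.
  move=> e1 e2 a He1 He2 Ha; rewrite /Fg /g !big_cons big_nil /=.
    by rewrite Hadd // mulrDl mulr1z !mulrN1z addr0 -opprD subrr.
  move=> e a1 a2 He Ha1 Ha2; rewrite /Fg /g !big_cons big_nil /=.
    by rewrite mulrDr mulr1z !mulrN1z addr0 -opprD subrr.
  move=> e c a He Hc Ha; rewrite /Fg /g !big_cons big_nil /=.
    rewrite (Ecomm e c He (A'A c Hc)) Hlin // mulr1z mulrN1z addr0.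
    by rewrite ((A'Z c Hc).2 _ (A'A _ (Hphi j e He))) -mulrA subrr.
split.
  move=> s Hs; split.
    apply: Mi1 => y Hy; have [h1 h2] := Hs y Hy; split=> //; exact: ZAA.
  move=> a Ha; rewrite /fmul mulr_suml mulr_sumr; apply: eq_big_seq => y Hy.
  have [h1 [h2 h3]] := Hs y Hy.
  rewrite mulrzAl mulrzAr; congr (_ *~ _).
  by rewrite -mulrA h3 // mulrA (Ecomm _ a h1 Ha) -mulrA.
  move=> x [Hx Hxc]; have [s [Hs Hsx]] := Mi2 x Hx.
  set b := fun j => Fg (g j) s.
  have Hb : forall j, ZA (b j).
    move=> j; split.
      apply: Qsum => // y Hy; apply: Qmz => //; have [h1 h2] := Hs y Hy.
      by apply: AM => //; apply: A'A; apply: Hphi.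
    move=> a Ha.
    set sa := [seq (y.1, (y.2.1, y.2.2 * a)) | y <- s] ++
              [seq (- y.1, (y.2.1, a * y.2.2)) | y <- s].
    have Hsa : supported E' A sa.
      move=> y; rewrite mem_cat => /orP [] /mapP [y' Hy' ->] /=;
        have [h1 h2] := Hs y' Hy'; split=> //; exact: AM.
    have H0 : fmul sa = 0.
      rewrite /fmul -/(Fg (fun e z => e * z) sa) Fg_sa.
        by rewrite /Fg -/(fmul s) Hsx Hxc // subrr.
      move=> y Hy; have [h1 h2] := Hs y Hy; split; first by rewrite mulrA.
      by rewrite mulrA (Ecomm _ a h1 Ha) mulrA.
    have := Fg_tz (Hrel j) (Mi3 sa Hsa H0).
    rewrite Fg_sa; first by move/eqP; rewrite subr_eq0 => /eqP.
    move=> y Hy; have [h1 h2] := Hs y Hy; rewrite /g; split; first by rewrite mulrA.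
    by rewrite mulrA ((A'Z _ (Hphi j _ h1)).2 a Ha) mulrA.
  exists [seq (1, (es j, b j)) | j <- index_enum 'I_n]; split.
    by move=> y /mapP [j _ ->] /=; split.
  rewrite -Hsx /fmul big_map.
  under eq_bigr do rewrite mulr1z /b /Fg mulr_sumr.
  rewrite exchange_big /=; apply: eq_big_seq => y Hy.
  have [h1 h2] := Hs y Hy.
  under eq_bigr do rewrite mulrzAr.
  rewrite -mulrz_suml; congr (_ *~ _).
  rewrite {2}(Hdec _ h1) mulr_suml; apply: eq_bigr => j _.
  by rewrite /g mulrA (Ecomm _ _ (Hes j) (A'A _ (Hphi j _ h1))).
move=> s Hs H0.
have sA : supported E' A s by move=> y Hy; have [h1 h2] := Hs y Hy; split=> //; exact: ZAA.
have psi0 : forall j, Fg (g j) s = 0 := fun j => Fg_tz (Hrel j) (Mi3 s sA H0).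
apply: eqv_tz.
set T := fun y : int * (B * B) =>
  flatten [seq [:: (y.1, (es j, phi j y.2.1 * y.2.2))] | j <- index_enum 'I_n].
set U := fun j : 'I_n => [seq (y.1, (es j, phi j y.2.1 * y.2.2)) | y <- s].
apply: (eqv_trans (t:=(flatten [seq [:: y] | y <- s]))).
  by apply: eqv_ext => k; rewrite fcoeff_flatten big_map -fcoeff_seq1.
apply: (eqv_trans (t:=(flatten [seq T y | y <- s]))).
  apply: eqv_map => [[m [e z]]] Hy; have [/= He Hz] := Hs _ Hy.
  apply: (eqv_trans (t:=(scl m [:: (1, (e, z))]))).
    by apply: eqv_ext => k; rewrite fcoeff_scl !fcoeff_cons fcoeff_nil /=; case: ifP => _; ring.
  apply: (eqv_trans (t:=scl m (flatten [seq [:: (1, (es j, phi j e * z))] | j <- index_enum 'I_n]))).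
    apply: eqv_scl.
    have -> : [:: (1, (e, z))] = [:: (1, (\sum_(j <- index_enum 'I_n) phi j e * es j, z))].
      by rewrite -Hdec.
    have HfP : forall j, j \in index_enum 'I_n -> E' (phi j e * es j).
      by move=> j _; apply: EM; [exact: Hphi | exact: Hes].
    apply: (eqv_trans (eqv_LC A' E0 ED HfP Hz)).
    by apply: eqv_map => j _; apply: eqv_BL => //; [exact: Hphi | apply: Ecomm => //; apply: A'A; exact: Hphi].
  apply: eqv_ext => k; rewrite fcoeff_scl /T /= !fcoeff_flatten !big_map mulr_sumr.
  by apply: eq_bigr => j _; rewrite !fcoeff_cons fcoeff_nil /=; case: ifP => _; ring.
apply: (eqv_trans (t:=(flatten [seq U j | j <- index_enum 'I_n]))).
  apply: eqv_ext => k; rewrite !fcoeff_flatten !big_map.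
  under [RHS]eq_bigr do rewrite fcoeff_seq1 big_map.
  rewrite exchange_big /=; apply: eq_bigr => y _.
  by rewrite /T fcoeff_flatten big_map.
apply: (eqv_trans (t:=(flatten [seq [::] | j <- index_enum 'I_n]))).
  apply: eqv_map => j _.
  have Hf : forall y, y \in s -> ZA (phi j y.2.1 * y.2.2).
    move=> y Hy; have [h1 h2] := Hs y Hy; apply: ZM => //; apply: A'Z; exact: Hphi.
  apply: (eqv_trans (eqv_AC A' Z0 ZD ZN (fun y => y.1) (Hes j) Hf)).
  by move: (psi0 j); rewrite /Fg /g => ->; apply: eqv_R4.
apply: eqv_ext => k; rewrite fcoeff_flatten big_map big1 ?fcoeff_nil //.
Qed.
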